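(* Let $\Omega\subset\mathbb{R}^N$ be a nonempty open bounded connected set, $X=\overline{\Omega}$, $Y\subset\mathbb{R}^N$, $\mu\in\mathcal{P}(X)$, $\nu\in\mathcal{P}(Y)$, $H,K:X\to(0,+\infty)$ in $L^1(X,\mu)$, $\mathcal{A}$ a family of balls covering $X$, and $u\in\mathrm{Refo}(\mu;\nu)^{H,K}$. If $u$ is differentiable at $x_0\in\Omega$, then $Ju(x_0)=\det\nabla u(x_0)\neq0$.
   Context: For $u:X\to Y$, $x_0\in X$: $e_u(x_0)=\limsup_{x\to x_0,\,x\ne x_0}\frac{|u(x)-u(x_0)|}{|x-x_0|}$, $c_u(x_0)=\limsup_{x\to x_0,\,x\ne x_0}\frac{|x-x_0|}{|u(x)-u(x_0)|}$ (quotient $+\infty$ if $u(x)=u(x_0)$). $\mathrm{Refo}(\mu;\nu)^{H,K}$ is the set of maps $u:X\to Y$ with $u_\#\mu=\nu$ (i.e. $\mu(u^{-1}(A))=\nu(A)$ for Borel $A$) such that for every $x\in X$ there is $B(x,r)\in\mathcal{A}$ with $c_u(y)\le H(x)$, $e_u(y)\le K(x)$ for all $y\in\overline{B}(x,r)\cap\Omega$. *)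

(* Defs.v *)
From HB Require Import structures.
From mathcomp Require Import all_boot all_order all_algebra.
From mathcomp Require Import all_classical all_reals all_analysis.
Set Implicit Arguments. Unset Strict Implicit. Unset Printing Implicit Defensive.
Import Order.TTheory GRing.Theory Num.Theory.
Import numFieldNormedType.Exports.
Local Open Scope classical_set_scope.
Local Open Scope ring_scope.

Section Defs.
Variables (R : realType) (N : nat).
Notation V := 'rV[R]_N.

Definition enorm (v : V) : R := Num.sqrt (\sum_(i < N) v ord0 i ^+ 2).

Definition eball (x : V) (r : R) : set V := [set y | enorm (y - x) < r].
Definition ecball (x : V) (r : R) : set V := [set y | enorm (y - x) <= r].

Definition BorelRV : Type := g_sigma_algebraType (@open V).

Definition quot_e (u : V -> V) (x0 x : V) : \bar R :=
  (enorm (u x - u x0) / enorm (x - x0))%:E.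
Definition quot_c (u : V -> V) (x0 x : V) : \bar R :=
  if u x == u x0 then +oo%E else (enorm (x - x0) / enorm (u x - u x0))%:E.

(** limsup_{x -> x0, x <> x0, x in D} q x
    = inf_{r > 0} sup { q x | x in D, 0 < |x - x0| < r }. *)
Definition limsup_punct (D : set V) (q : V -> \bar R) (x0 : V) : \bar R :=
  ereal_inf [set ereal_sup (q @` [set x | D x /\ 0 < enorm (x - x0) < r])
            | r in [set r : R | 0 < r]].

Definition e_u (X : set V) (u : V -> V) (x0 : V) : \bar R :=
  limsup_punct X (quot_e u x0) x0.
Definition c_u (X : set V) (u : V -> V) (x0 : V) : \bar R :=
  limsup_punct X (quot_c u x0) x0.

(** Refo(mu; nu)^{H,K}: the family A of balls is given as a set of
    (center, radius) pairs; u is a map X -> Y (u(X) ⊆ Y) with u_# mu = nu. *)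
Definition Refo (Omega X Y : set V)
    (mu nu : set BorelRV -> \bar R) (H K : V -> R) (A : set (V * R))
    (u : V -> V) : Prop :=
  [/\ u @` X `<=` Y,
      (forall B : set BorelRV, measurable B ->
          mu (X `&` u @^-1` B) = nu B)
    & forall x, X x -> exists r, A (x, r) /\
        forall y, ecball x r y -> Omega y ->
          (c_u X u y <= (H x)%:E)%E /\ (e_u X u y <= (K x)%:E)%E].

End Defs.

(* Main.v *)
Require Import Defs.
From HB Require Import structures.
From mathcomp Require Import all_boot all_order all_algebra.
From mathcomp Require Import all_classical all_reals all_analysis.
From mathcomp Require Import ring.
Import Order.TTheory GRing.Theory Num.Theory.
Import numFieldNormedType.Exports.
Local Open Scope classical_set_scope.
Local Open Scope ring_scope.


Section S.
Variables (R : realType) (N : nat).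

Lemma entry_le_norm (w : 'rV[R]_N) i : `|w ord0 i| <= `|w|.
Proof.
change (`|w ord0 i| <= mx_norm w); rewrite mx_normrE.
exact: (le_bigmax _ (fun ij : 'I_1 * 'I_N => `|w ij.1 ij.2|) (ord0, i)).
Qed.

Lemma enorm_le (w : 'rV[R]_N) : enorm w <= N%:R * `|w|.
Proof.
rewrite /enorm -(@ger0_norm _ (N%:R * `|w|)) ?mulr_ge0 //.
rewrite -sqrtr_sqr ler_sqrt ?sqr_ge0 //.
apply: (@le_trans _ _ (\sum_(i < N) `|w|^+2)).
  apply: ler_sum => i _; rewrite -real_normK ?num_real //.
  by rewrite lerXn2r ?nnegrE ?normr_ge0 ?entry_le_norm.
rewrite sumr_const card_ord -[_ *+ N]mulr_natl exprMn.
rewrite ler_wpM2r ?sqr_ge0 //.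
rewrite expr2 -natrM ler_nat; case: N => // n; exact: leq_pmull.
Qed.

Lemma enormZ (h : R) (w : 'rV[R]_N) : enorm (h *: w) = `|h| * enorm w.
Proof.
rewrite /enorm -sqrtr_sqr -sqrtrM ?sqr_ge0 // mulr_sumr.
by congr Num.sqrt; apply: eq_bigr => i _; rewrite mxE exprMn.
Qed.

Lemma enorm0 : enorm (0 : 'rV[R]_N) = 0.
Proof. by rewrite /enorm big1 ?sqrtr0 // => i _; rewrite mxE expr0n. Qed.

Lemma enorm_gt0 (w : 'rV[R]_N) : w != 0 -> 0 < enorm w.
Proof.
move=> wn0; have [i wi] : exists i, w ord0 i != 0.
  apply/existsP; apply: contraR wn0 => /existsPn H; apply/eqP/rowP => i.
  by rewrite mxE; apply/eqP; move: (H i); rewrite negbK.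
rewrite /enorm sqrtr_gt0 (bigD1 i) //=.
rewrite ltr_pwDl ?sumr_ge0 // => *; rewrite ?sqr_ge0 //.
by rewrite lt0r sqr_ge0 sqrf_eq0 wi.
Qed.
End S.

Lemma near0_lt' (R : realType) (e : R) : 0 < e -> \forall h \near (0:R), `|h| < e.
Proof. move=> e0; apply/nbhs_ballP; exists e => //= h; by rewrite /ball /= sub0r normrN. Qed.


Theorem lemma2p10 (R : realType) (N : nat)
  (Omega Y : set 'rV[R]_N)
  (mu nu : probability (BorelRV R N) R)
  (H K : 'rV[R]_N -> R) (A : set ('rV[R]_N * R))
  (u : 'rV[R]_N -> 'rV[R]_N) (x0 : 'rV[R]_N) :
  Omega !=set0 -> open Omega -> bounded_set Omega -> connected Omega ->
  (* mu in P(X), X = closure Omega *)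
  mu (~` closure Omega) = 0%E ->
  (* nu in P(Y): a probability on the Borel sets of Y (trace sigma-algebra) *)
  (forall B C : set (BorelRV R N), measurable B -> measurable C ->
     B `&` Y = C `&` Y -> nu B = nu C) ->
  (* H, K : X -> (0, +oo), in L^1(X, mu) *)
  (forall x, closure Omega x -> 0 < H x) ->
  (forall x, closure Omega x -> 0 < K x) ->
  mu.-integrable (closure Omega) (EFin \o H) ->
  mu.-integrable (closure Omega) (EFin \o K) ->
  (* A is a family of (nondegenerate) balls covering X *)
  (forall p, A p -> 0 < p.2) ->
  closure Omega `<=` \bigcup_(p in A) eball p.1 p.2 ->
  Refo Omega (closure Omega) Y mu nu H K A u ->
  Omega x0 -> differentiable u x0 ->
  \det ('J u x0) != 0.
Proof.
move=> _ oO _ _ _ _ Hpos _ _ _ Apos _ [_ _ Hrefo] Ox0 du.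
apply/negP => /det0P [v vn0 vJ].
have Dv : 'D_v u x0 = 0 by rewrite deriveEjacobian.
have cx0 : closure Omega x0 by exact: subset_closure.
have [r [Ar Hr]] := Hrefo x0 cx0.
have r0 := Apos _ Ar.
have ex0 : ecball x0 r x0 by rewrite /ecball /= subrr enorm0; exact: ltW.
have [cH _] := Hr x0 ex0 Ox0.
set M := H x0 + 1.
have M0 : 0 < M by rewrite /M addr_gt0 // Hpos.
have : (c_u (closure Omega) u x0 < M%:E)%E.
  by apply: (le_lt_trans cH); rewrite lte_fin /M ltrDl.
move=> /ereal_inf_lt [_ [rho /= rho0 <-]] Hsup.
have Hq : forall x, closure Omega x -> 0 < enorm (x - x0) < rho ->
    (quot_c u x0 x < M%:E)%E.
  move=> x cx hx; apply: le_lt_trans Hsup.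
  by apply: ereal_sup_ubound; exists x.
have dv := @diff_derivable _ _ _ u x0 v du.
set C : R := N%:R + 1.
have C0 : 0 < C by rewrite /C ltr_pwDr.
have ev0 := @enorm_gt0 _ _ v vn0.
set eps := enorm v / (M * C).
have eps0 : 0 < eps by rewrite /eps divr_gt0 // mulr_gt0.
have /eqaddoP /(_ eps eps0) Hlo := derivable_nbhs dv.
have : nbhs x0 Omega by apply: open_nbhs_nbhs; split.
move=> /nbhs_ballP [d /= d0 Hd].
have Hnear : \forall h \near (0:R), [/\ `|u (h *: v + x0) - u x0| <= eps * `|h|,
    `|h| < d / (`|v| + 1) & `|h| < rho / enorm v].
  near=> h; split.
  - near: h; apply: filterS Hlo => h /=.
    rewrite /cst /= Dv. by rewrite !fctE scaler0 addr0.
  - near: h; apply: near0_lt'; rewrite divr_gt0 // ltr_wpDl.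
  - near: h; apply: near0_lt'; rewrite divr_gt0 //.
move: Hnear => /nbhs_ballP [del /= del0 Hdel].
have h0 : 0 < del / 2 by rewrite divr_gt0.
have := Hdel (del / 2).
case.
  rewrite /ball /= sub0r normrN gtr0_norm // ltr_pdivrMr // ltr_pMr //.
  by rewrite ltr1n.
set h := del / 2.
rewrite (gtr0_norm h0) => -[Hu Hh1 Hh2].
set x := h *: v + x0.
have Ox : Omega x.
  apply: Hd; rewrite -ball_normE /ball_ /= /x opprD addrCA subrr addr0 normrN.
  rewrite normrZ gtr0_norm //.
  apply: le_lt_trans (_ : h * (`|v| + 1) < d).
    by rewrite ler_pM2l // lerDl.
  by rewrite -ltr_pdivlMr // ltr_wpDl.
have ex : enorm (x - x0) = h * enorm v by rewrite /x addrK enormZ gtr0_norm.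
have := Hq x (subset_closure Ox).
rewrite ex mulr_gt0 //= -ltr_pdivlMr // => /(_ Hh2).
rewrite /quot_c; case: eqP => [_|/eqP neq]; first by [].
rewrite lte_fin.
have E0 : 0 < enorm (u x - u x0) by apply: enorm_gt0; rewrite subr_eq0.
rewrite ltr_pdivrMr // ex => lt1.
have EC : enorm (u x - u x0) <= C * (eps * h).
  apply: (le_trans (@enorm_le _ _ (u x - u x0))).
  apply: (@le_trans _ _ (C * `|u x - u x0|)).
    by rewrite ler_wpM2r ?normr_ge0 // /C lerDl ler01.
  by rewrite ler_pM2l.
have eq1 : M * (C * (eps * h)) = h * enorm v.
  by rewrite /eps; field; rewrite !gt_eqF.
have := lt_le_trans lt1 (ler_wpM2l (ltW M0) EC).
by rewrite eq1 ltxx.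
Unshelve. all: by end_near.
Qed.
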